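(* Let $B\in\mathbb R^{n\times m}$, let $T_{\mathcal P}$ be a symmetric positive definite $n\times n$ matrix, and let $h:\mathbb R^n\to\mathbb R$ be differentiable with $h\in\mathcal S^{1,1}_{\mu_{h,T_{\mathcal P}},L_{h,T_{\mathcal P}}}$ with respect to $T_{\mathcal P}$. For $u_1,u_2\in\mathbb R^m$, $p_1,p_2\in\mathbb R^n$, let $q_i=p_i-T_{\mathcal P}^{-1}Bu_i$. Then $$\big(\nabla h(p_1)-\nabla h(p_2),-T_{\mathcal P}^{-1}B(u_1-u_2)\big)\ge\frac{\mu_{h,T_{\mathcal P}}}{2}\|q_1-q_2\|^2_{T_{\mathcal P}}-\frac{L_{h,T_{\mathcal P}}}{2}\|B(u_1-u_2)\|^2_{T_{\mathcal P}^{-1}}-\frac12\big(\nabla h(p_1)-\nabla h(p_2),p_1-p_2\big).$$ In particular, when $h(p)=(b,p)$ is affine, equality holds with all terms equal to $0$.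
   Context: For SPD $M$, $\|x\|_M=(Mx,x)^{1/2}$; $D_h(y,x)=h(y)-h(x)-(\nabla h(x),y-x)$; $h\in\mathcal S^{1,1}_{\mu_{h,M},L_{h,M}}$ w.r.t. $M$ means $\frac{\mu_{h,M}}2\|x-y\|_M^2\le D_h(y,x)\le\frac{L_{h,M}}2\|x-y\|_M^2$ for all $x,y$, with $\mu_{h,M}\ge0$ (for affine $h$ one takes $\mu_{h,T_{\mathcal P}}=L_{h,T_{\mathcal P}}=0$). *)

(* Defs.v *)
From HB Require Import structures.
From mathcomp Require Import all_boot all_order all_algebra.
From mathcomp Require Import all_classical all_reals all_analysis.
Set Implicit Arguments. Unset Strict Implicit. Unset Printing Implicit Defensive.
Import Order.TTheory GRing.Theory Num.Theory.
Import numFieldNormedType.Exports.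
Local Open Scope ring_scope.

Definition ip (R : realType) (n : nat) (x y : 'cV[R]_n) : R := (x^T *m y) 0 0.

Definition sqnormM (R : realType) (n : nat) (M : 'M[R]_n) (x : 'cV[R]_n) : R :=
  ip (M *m x) x.

Definition spd (R : realType) (n : nat) (M : 'M[R]_n) : Prop :=
  M^T = M /\ forall x : 'cV[R]_n, x != 0 -> 0 < ip (M *m x) x.

Definition is_gradient (R : realType) (n : nat) (h : 'cV[R]_n -> R)
  (g : 'cV[R]_n -> 'cV[R]_n) : Prop :=
  forall x, differentiable h x /\ forall v : 'cV[R]_n, 'D_v h x = ip (g x) v.

Definition bregman (R : realType) (n : nat) (h : 'cV[R]_n -> R)
  (g : 'cV[R]_n -> 'cV[R]_n) (y x : 'cV[R]_n) : R :=
  h y - h x - ip (g x) (y - x).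

Definition S11 (R : realType) (n : nat) (M : 'M[R]_n) (mu L : R)
  (h : 'cV[R]_n -> R) (g : 'cV[R]_n -> 'cV[R]_n) : Prop :=
  0 <= mu /\ forall x y : 'cV[R]_n,
    mu / 2 * sqnormM M (x - y) <= bregman h g y x /\
    bregman h g y x <= L / 2 * sqnormM M (x - y).

(* Main.v *)
Require Import Defs.
From HB Require Import structures.
From mathcomp Require Import all_boot all_order all_algebra.
From mathcomp Require Import all_classical all_reals all_analysis.
From mathcomp Require Import lra.
Import Order.TTheory GRing.Theory Num.Theory.
Import numFieldNormedType.Exports.
Local Open Scope ring_scope.

Section H.
Variables (R : realType) (n : nat).
Implicit Types (x y z : 'cV[R]_n).

Lemma ipC x y : ip x y = ip y x.
Proof.
rewrite /ip; have -> : (x^T *m y) 0 0 = ((x^T *m y)^T) 0 0 by rewrite [RHS]mxE.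
by rewrite trmx_mul trmxK.
Qed.

Lemma ipDl x y z : ip (x + y) z = ip x z + ip y z.
Proof. by rewrite /ip linearD /= mulmxDl mxE. Qed.

Lemma ipNl x z : ip (- x) z = - ip x z.
Proof. by rewrite /ip linearN /= mulNmx mxE. Qed.

Lemma ipBl x y z : ip (x - y) z = ip x z - ip y z.
Proof. by rewrite ipDl ipNl. Qed.

Lemma ipDr x y z : ip z (x + y) = ip z x + ip z y.
Proof. by rewrite ipC ipDl !(ipC _ z). Qed.

Lemma ipNr x z : ip z (- x) = - ip z x.
Proof. by rewrite ipC ipNl ipC. Qed.

Lemma ipBr x y z : ip z (x - y) = ip z x - ip z y.
Proof. by rewrite ipDr ipNr. Qed.

Lemma ipZr (a : R) x z : ip z (a *: x) = a * ip z x.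
Proof. by rewrite /ip -scalemxAr mxE. Qed.

Lemma sqnormN (M : 'M[R]_n) x : sqnormM M (- x) = sqnormM M x.
Proof. by rewrite /sqnormM mulmxN ipNl ipNr opprK. Qed.

Lemma spd_unit (M : 'M[R]_n) : spd M -> M \in unitmx.
Proof.
move=> [Msym Mpos]; rewrite -row_free_unit; apply: inj_row_free => v vM0.
apply/eqP; apply: contraT => vn0.
have xn0 : v^T != 0 by apply: contra vn0 => /eqP h; rewrite -[v]trmxK h linear0.
have := Mpos _ xn0.
have -> : M *m v^T = 0 by rewrite -{1}Msym -trmx_mul vM0 linear0.
by rewrite /ip linear0 mul0mx mxE ltxx.
Qed.

Lemma zmod4 (V : zmodType) (a b c e : V) : (a - b) - (c - e) = (a - c) - (b - e).
Proof. by rewrite !opprB [LHS]addrACA [RHS]addrACA (addrC (- c)). Qed.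

End H.

Theorem lemma5p2 (R : realType) (n m : nat) (B : 'M[R]_(n, m)) (TP : 'M[R]_n) :
  spd TP ->
  (forall (h : 'cV[R]_n -> R) (gh : 'cV[R]_n -> 'cV[R]_n) (mu L : R),
     is_gradient h gh -> S11 TP mu L h gh ->
     forall (u1 u2 : 'cV[R]_m) (p1 p2 : 'cV[R]_n),
       let q1 := p1 - invmx TP *m B *m u1 in
       let q2 := p2 - invmx TP *m B *m u2 in
       ip (gh p1 - gh p2) (- (invmx TP *m B *m (u1 - u2)))
       >= mu / 2 * sqnormM TP (q1 - q2)
          - L / 2 * sqnormM (invmx TP) (B *m (u1 - u2))
          - 1 / 2 * ip (gh p1 - gh p2) (p1 - p2)) /\
  (forall (b : 'cV[R]_n) (gh : 'cV[R]_n -> 'cV[R]_n),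
     is_gradient (fun p => ip b p) gh ->
     S11 TP 0 0 (fun p => ip b p) gh /\
     forall (u1 u2 : 'cV[R]_m) (p1 p2 : 'cV[R]_n),
       let q1 := p1 - invmx TP *m B *m u1 in
       let q2 := p2 - invmx TP *m B *m u2 in
       [/\ ip (gh p1 - gh p2) (- (invmx TP *m B *m (u1 - u2))) = 0,
           0 / 2 * sqnormM TP (q1 - q2) = 0,
           0 / 2 * sqnormM (invmx TP) (B *m (u1 - u2)) = 0 &
           1 / 2 * ip (gh p1 - gh p2) (p1 - p2) = 0]).
Proof.
move=> Tspd; have Tu := @spd_unit _ _ _ Tspd; split.
  move=> h gh mu L _ [_ HS] u1 u2 p1 p2 /=.
  set d := invmx TP *m B *m (u1 - u2).
  have eqq : (p1 - invmx TP *m B *m u1) - (p2 - invmx TP *m B *m u2) = (p1 - p2) - d by rewrite /d !mulmxBr zmod4.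
  have Td : TP *m d = B *m (u1 - u2) by rewrite /d !mulmxA mulmxV // mul1mx.
  have eqS : sqnormM (invmx TP) (B *m (u1 - u2)) = sqnormM TP d.
    by rewrite /sqnormM -Td mulmxA mulVmx // mul1mx ipC.
  rewrite eqq eqS.
  have [A1 _] := HS p1 (p2 + d).
  have [A2 _] := HS p2 (p1 - d).
  have [_ A3] := HS p2 (p2 + d).
  have [_ A4] := HS p1 (p1 - d).
  have e1 : p1 - (p2 + d) = (p1 - p2) - d by rewrite opprD addrA.
  have e2 : p2 - (p1 - d) = - ((p1 - p2) - d) by rewrite !opprB addrCA.
  have e3 : p2 - (p2 + d) = - d by rewrite opprD addrA subrr add0r.
  have e4 : p1 - (p1 - d) = d by rewrite opprB addrC subrK.
  rewrite e1 in A1; rewrite e2 sqnormN in A2; rewrite e3 sqnormN in A3; rewrite e4 in A4.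
  move: A1 A2 A3 A4; rewrite /bregman.
  set a := mu / 2 * _; set c := L / 2 * _.
  rewrite ?ipBl ?ipDr ?ipBr ?ipNr ?ipDr ?ipBr ?ipNr.
  lra.
move=> b gh Hg.
have key : forall x v, ip (gh x) v = ip b v.
  move=> x v; have [_ Hd] := Hg x; rewrite -Hd /derive.
  apply: lim_near_cst; first exact: norm_hausdorff.
  near=> t.
  have tn0 : t != 0 by near: t; exact: nbhs_dnbhs_neq.
  rewrite /= /shift ipDr ipZr addrK.
  have -> : t^-1 *: (t * ip b v) = t^-1 * (t * ip b v) by [].
  by rewrite mulrA mulVf // mul1r.
split.
  split => // x y; rewrite /bregman key ipBr subrr mul0r mul0r; lra.
move=> u1 u2 p1 p2 /=.
by split; rewrite ?mul0r // ipBl !key subrr ?mulr0.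
Unshelve. all: by end_near.
Qed.
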